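(* Let $\Gamma\subseteq\mathbb{Z}^d$ be a finite set. For every $n\ge2$ and $x\in\bar\Gamma$, $$\rho_n(\Phi_\Gamma(x))=\mathbb{E}^x\Big[\sum_{j=0}^{\tau-1}g_n(S_j)\Big],\qquad g_n(y)=\sum_{e\in\mathbb{Z}^d,|e|=1}\frac1{2d}\sum_{i=1}^n\frac{e^{\otimes i}}{i!}\otimes\rho_{n-i}(\Phi_\Gamma(y+e)),$$ and $\rho_0(\Phi_\Gamma(x))=1$, $\rho_1(\Phi_\Gamma(x))=0$ for every $x\in\bar\Gamma$.
   Context: Let $(S_k)_{k\ge0}$ be the simple random walk on $\mathbb{Z}^d$ started at $S_0=x$ (under $\mathbb{E}^x$), with i.i.d. increments uniformly distributed on the $2d$ unit vectors of $\mathbb{Z}^d$. $\partial\Gamma=\{y\in\mathbb{Z}^d\setminus\Gamma: |y-w|=1\text{ for some }w\in\Gamma\}$, $\bar\Gamma=\Gamma\cup\partial\Gamma$, $\tau=\min\{k\ge0:S_k\notin\Gamma\}$. $T((\mathbb{R}^d))$ is the algebra of formal tensor series $\mathbf a=(a_0,a_1,\dots)$, $a_n\in(\mathbb{R}^d)^{\otimes n}$, with $(\mathbf a\otimes\mathbf b)_n=\sum_{k=0}^na_k\otimes b_{n-k}$ and $\rho_n(\mathbf a)=a_n$; $\exp(v)=\sum_{i\ge0}v^{\otimes i}/i!$ for $v\in\mathbb{R}^d$. $\Phi_\Gamma(x)=\mathbb{E}^x[\exp(S_1-S_0)\otimes\cdots\otimes\exp(S_\tau-S_{\tau-1})]$ (coordinatewise;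 equal to $(1,0,0,\dots)$ if $\tau=0$), the expected signature of the piecewise linear random walk path stopped at $\tau$. *)

(* Defs.v *)
From Stdlib Require Import Reals ZArith Arith List Lia ClassicalEpsilon.
Import ListNotations.
Open Scope R_scope.

Definition lsum {A : Type} (f : A -> R) (l : list A) : R :=
  fold_right Rplus 0 (map f l).

(* value of a convergent series sum_{k>=0} u k (arbitrary if divergent) *)
Definition series_value (u : nat -> R) : R :=
  epsilon (inhabits 0) (fun l => infinite_sum u l).

Definition vadd (x y : list Z) : list Z :=
  map (fun p => (fst p + snd p)%Z) (combine x y).

(* the 2d unit vectors: k = 2i gives +e_i, k = 2i+1 gives -e_i (i < d) *)
Definition unitv (d k : nat) : list Z :=
  map (fun i => if Nat.eqb i (Nat.div k 2)
                then (if Nat.even k then 1%Z else (-1)%Z) else 0%Z) (seq 0 d).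

Definition sqdist (x y : list Z) : Z :=
  fold_right Z.add 0%Z (map (fun p => ((fst p - snd p) * (fst p - snd p))%Z) (combine x y)).

Definition inG (G : list (list Z)) (y : list Z) : bool :=
  if in_dec (list_eq_dec Z.eq_dec) y G then true else false.

(* x in closure(Gamma) = Gamma ∪ ∂Gamma *)
Definition in_closure (G : list (list Z)) (x : list Z) : Prop :=
  In x G \/ (~ In x G /\ exists w, In w G /\ sqdist x w = 1%Z).

Fixpoint words (m k : nat) : list (list nat) :=
  match k with
  | O => [[]]
  | S k' => flat_map (fun a => map (cons a) (words m k')) (seq 0 m)
  end.

(* position S_j of the walk started at x with step choices s *)
Definition wpos (d : nat) (x : list Z) (s : list nat) (j : nat) : list Z :=
  fold_left vadd (map (unitv d) (firstn j s)) x.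

(* the event {tau = length s}: S_0..S_{k-1} in Gamma, S_k not in Gamma *)
Definition exits_at (d : nat) (G : list (list Z)) (x : list Z) (s : list nat) : bool :=
  forallb (fun j => inG G (wpos d x s j)) (seq 0 (length s))
  && negb (inG G (wpos d x s (length s))).

(* E^x[F(S_0,...,S_tau)] = sum_k sum_{step words s of length k with tau = k} (2d)^{-k} F(s) *)
Definition expect (d : nat) (G : list (list Z)) (x : list Z) (F : list nat -> R) : R :=
  series_value (fun k =>
    lsum (fun s => if exits_at d G x s then (/ INR (2 * d)) ^ k * F s else 0)
         (words (2 * d) k)).

(* a tensor series is given by its coordinates: a w = coefficient of
   e_{w_1} ⊗ ... ⊗ e_{w_n} (w a word over {0..d-1}); rho_n a = restriction to words of length n *)
Definition tensor := list nat -> R.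

Definition tunit : tensor := fun w => match w with [] => 1 | _ => 0 end.

Definition tmul (a b : tensor) : tensor :=
  fun w => lsum (fun k => a (firstn k w) * b (skipn k w)) (seq 0 (S (length w))).

(* exp(v) = sum_i v^{⊗ i}/i! *)
Definition texp (v : list Z) : tensor :=
  fun w => fold_right Rmult 1 (map (fun i => IZR (nth i v 0%Z)) w) / INR (fact (length w)).

(* signature exp(S_1-S_0) ⊗ ... ⊗ exp(S_k - S_{k-1}) of the piecewise linear path *)
Definition sig (d : nat) (s : list nat) : tensor :=
  fold_right (fun k acc => tmul (texp (unitv d k)) acc) tunit s.

Definition Phi (d : nat) (G : list (list Z)) (x : list Z) : tensor :=
  fun w => expect d G x (fun s => sig d s w).

(* g_n(y) = sum_{|e|=1} 1/(2d) sum_{i=1}^n e^{⊗ i}/i! ⊗ rho_{n-i}(Phi(y+e)),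
   evaluated at a word w of length n *)
Definition gfun (d : nat) (G : list (list Z)) (n : nat) (y : list Z) : tensor :=
  fun w => lsum (fun k => / INR (2 * d) *
             lsum (fun i => texp (unitv d k) (firstn i w) *
                            Phi d G (vadd y (unitv d k)) (skipn i w)) (seq 1 n))
           (seq 0 (2 * d)).

(* Main.v *)
Require Import Defs.
From Stdlib Require Import Reals ZArith Arith List Lia Lra ClassicalEpsilon Classical FunctionalExtensionality.
Import ListNotations.
Open Scope R_scope.

Lemma lsum_nil {A} (f : A -> R) : lsum f [] = 0.
Proof. reflexivity. Qed.
Lemma lsum_cons {A} (f : A -> R) a l : lsum f (a :: l) = f a + lsum f l.
Proof. reflexivity. Qed.
Lemma lsum_app {A} (f : A -> R) l1 l2 : lsum f (l1 ++ l2) = lsum f l1 + lsum f l2.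
Proof. induction l1; simpl; [rewrite lsum_nil; ring|]. rewrite !lsum_cons, IHl1; ring. Qed.
Lemma lsum_ext {A} (f g : A -> R) l : (forall x, In x l -> f x = g x) -> lsum f l = lsum g l.
Proof. induction l; intros H; [reflexivity|]. rewrite !lsum_cons. rewrite H, IHl; auto.
  intros; apply H; right; auto. left; auto. Qed.
Lemma lsum_plus {A} (f g : A -> R) l : lsum (fun x => f x + g x) l = lsum f l + lsum g l.
Proof. induction l; [simpl; unfold lsum; simpl; ring|]. rewrite !lsum_cons, IHl; ring. Qed.
Lemma lsum_scal {A} (f : A -> R) c l : lsum (fun x => c * f x) l = c * lsum f l.
Proof. induction l; [unfold lsum; simpl; ring|]. rewrite !lsum_cons, IHl; ring. Qed.
Lemma lsum_zero {A} (l : list A) : lsum (fun _ => 0) l = 0.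
Proof. induction l; [reflexivity|]. rewrite lsum_cons, IHl; ring. Qed.
Lemma lsum_le {A} (f g : A -> R) l : (forall x, In x l -> f x <= g x) -> lsum f l <= lsum g l.
Proof. induction l; intros H; [unfold lsum; simpl; lra|]. rewrite !lsum_cons.
  apply Rplus_le_compat; [apply H; left; auto| apply IHl; intros; apply H; right; auto]. Qed.
Lemma lsum_abs {A} (f : A -> R) l : Rabs (lsum f l) <= lsum (fun x => Rabs (f x)) l.
Proof. induction l; [unfold lsum; simpl; rewrite Rabs_R0; lra|]. rewrite !lsum_cons.
  eapply Rle_trans; [apply Rabs_triang|]. lra. Qed.
Lemma lsum_nonneg {A} (f : A -> R) l : (forall x, In x l -> 0 <= f x) -> 0 <= lsum f l.
Proof. intros H. rewrite <- (lsum_zero l). apply lsum_le; auto. Qed.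
Lemma lsum_const_le {A} (f : A -> R) c l : (forall x, In x l -> f x <= c) -> lsum f l <= INR (length l) * c.
Proof. induction l; intros H; [unfold lsum; simpl; lra|]. rewrite lsum_cons.
  simpl length. rewrite S_INR. assert (f a <= c) by (apply H; left; auto).
  assert (lsum f l <= INR (length l) * c) by (apply IHl; intros; apply H; right; auto). lra. Qed.
Lemma lsum_map {A B} (f : B -> R) (h : A -> B) l : lsum f (map h l) = lsum (fun x => f (h x)) l.
Proof. unfold lsum. rewrite map_map. reflexivity. Qed.
Lemma lsum_flat_map {A B} (f : B -> R) (g : A -> list B) l :
  lsum f (flat_map g l) = lsum (fun a => lsum f (g a)) l.
Proof. induction l; [reflexivity|]. simpl flat_map. rewrite lsum_app, lsum_cons, IHl; reflexivity. Qed.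
Lemma lsum_in_le {A} (f : A -> R) l a : (forall x, In x l -> 0 <= f x) -> In a l -> f a <= lsum f l.
Proof. induction l; intros H Ha; [destruct Ha|]. rewrite lsum_cons. destruct Ha as [<-|Ha].
  - assert (0 <= lsum f l) by (apply lsum_nonneg; intros; apply H; right; auto). lra.
  - assert (0 <= f a0) by (apply H; left; auto). assert (f a <= lsum f l) by (apply IHl; auto; intros; apply H; right; auto). lra. Qed.

Fixpoint psum (u : nat -> R) (N : nat) : R :=
  match N with O => 0 | S N => psum u N + u N end.

Lemma sum_f_psum u N : sum_f_R0 u N = psum u (S N).
Proof. induction N; simpl; [ring|]. simpl in IHN. rewrite IHN; reflexivity. Qed.

Lemma psum_shift u N : psum u (S N) = u 0%nat + psum (fun k => u (S k)) N.
Proof. induction N; simpl; [ring|]. simpl in IHN. rewrite IHN. ring. Qed.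

Lemma psum_le u v N : (forall k, u k <= v k) -> psum u N <= psum v N.
Proof. intros H; induction N; simpl; [lra|]. specialize (H N); lra. Qed.

Lemma psum_plus u v N : psum (fun k => u k + v k) N = psum u N + psum v N.
Proof. induction N; simpl; [ring|]. rewrite IHN; ring. Qed.
Lemma psum_scal u c N : psum (fun k => c * u k) N = c * psum u N.
Proof. induction N; simpl; [ring|]. rewrite IHN; ring. Qed.
Lemma psum_lsum {A} (u : A -> nat -> R) l N :
  psum (fun k => lsum (fun a => u a k) l) N = lsum (fun a => psum (u a) N) l.
Proof. induction N; simpl. - rewrite lsum_zero; reflexivity.
  - rewrite IHN, <- lsum_plus. reflexivity. Qed.

Lemma nonneg_conv u C : (forall k, 0 <= u k) -> (forall N, psum u N <= C) -> exists l, infinite_sum u l.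
Proof.
  intros H0 HC.
  destruct (growing_cv (sum_f_R0 u)) as [l Hl].
  - intro n. rewrite !sum_f_psum. simpl. specialize (H0 (S n)). simpl in H0. lra.
  - exists C. intros x [i ->]. rewrite sum_f_psum. apply HC.
  - exists l. exact Hl.
Qed.

Lemma abs_conv u C : (forall N, psum (fun k => Rabs (u k)) N <= C) -> exists l, infinite_sum u l.
Proof.
  intros HC.
  destruct (nonneg_conv (fun k => Rabs (u k) + u k) (2 * C)) as [la Ha].
  - intros k. pose proof (Rle_abs (- u k)). rewrite Rabs_Ropp in H. lra.
  - intros N. rewrite psum_plus. assert (psum u N <= psum (fun k => Rabs (u k)) N) by (apply psum_le; intros; apply Rle_abs).
    specialize (HC N). lra.
  - destruct (nonneg_conv (fun k => Rabs (u k)) C) as [lb Hb]; [intros; apply Rabs_pos| auto|].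
    exists (la - lb). unfold infinite_sum in *.
    assert (Un_cv (fun n => sum_f_R0 (fun k => Rabs (u k) + u k) n - sum_f_R0 (fun k => Rabs (u k)) n) (la - lb)).
    { apply CV_minus; [exact Ha| exact Hb]. }
    intros eps Heps. destruct (H eps Heps) as [N HN]. exists N. intros n Hn.
    replace (sum_f_R0 u n) with (sum_f_R0 (fun k => Rabs (u k) + u k) n - sum_f_R0 (fun k => Rabs (u k)) n).
    apply HN; auto.
    rewrite !sum_f_psum, psum_plus. ring.
Qed.

Lemma sv_eq u l : infinite_sum u l -> series_value u = l.
Proof.
  intros H. unfold series_value. apply (uniqueness_sum u).
  - apply (epsilon_spec (inhabits 0) (fun l => infinite_sum u l)). exists l; auto.
  - auto.
Qed.

Lemma isum_ext u v l : (forall k, u k = v k) -> infinite_sum u l -> infinite_sum v l.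
Proof. intros H. replace v with u; auto. apply functional_extensionality; auto. Qed.

Lemma isum_plus u v lu lv : infinite_sum u lu -> infinite_sum v lv -> infinite_sum (fun k => u k + v k) (lu + lv).
Proof. intros Hu Hv. unfold infinite_sum.
  assert (Un_cv (fun n => sum_f_R0 u n + sum_f_R0 v n) (lu + lv)) by (apply CV_plus; auto).
  intros eps Heps. destruct (H eps Heps) as [N HN]. exists N; intros n Hn.
  rewrite !sum_f_psum, psum_plus, <- !sum_f_psum. apply HN; auto. Qed.

Lemma isum_scal u c lu : infinite_sum u lu -> infinite_sum (fun k => c * u k) (c * lu).
Proof. intros Hu. unfold infinite_sum.
  assert (Un_cv (fun n => c * sum_f_R0 u n) (c * lu)).
  { apply CV_mult; auto. intros eps Heps; exists 0%nat; intros; unfold Rdist; rewrite Rminus_diag, Rabs_R0; lra. }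
  intros eps Heps. destruct (H eps Heps) as [N HN]. exists N; intros n Hn.
  rewrite !sum_f_psum, psum_scal, <- !sum_f_psum. apply HN; auto. Qed.

Lemma isum_zero : infinite_sum (fun _ => 0) 0.
Proof. intros eps Heps. exists 0%nat. intros n _. rewrite sum_f_psum.
  replace (psum (fun _ => 0) (S n)) with 0. unfold Rdist; rewrite Rminus_diag, Rabs_R0; lra.
  induction (S n); simpl; [ring|]. rewrite <- IHn0; ring. Qed.

Lemma isum_lsum {A} (u : A -> nat -> R) (lu : A -> R) l :
  (forall a, In a l -> infinite_sum (u a) (lu a)) ->
  infinite_sum (fun k => lsum (fun a => u a k) l) (lsum lu l).
Proof. induction l; intros H.
  - unfold lsum; simpl. apply isum_zero.
  - rewrite lsum_cons. apply (isum_ext (fun k => u a k + lsum (fun a0 => u a0 k) l)).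
    intros; rewrite lsum_cons; reflexivity.
    apply isum_plus; [apply H; left; auto| apply IHl; intros; apply H; right; auto]. Qed.

Lemma isum_shift u l : u 0%nat = 0 -> infinite_sum (fun k => u (S k)) l -> infinite_sum u l.
Proof. intros H0 H. unfold infinite_sum in *.
  apply (CV_shift _ 1%nat).
  intros eps Heps. destruct (H eps Heps) as [N HN]. exists N; intros n Hn.
  replace (sum_f_R0 u (n + 1)) with (sum_f_R0 (fun k => u (S k)) n). apply HN; auto.
  rewrite !sum_f_psum. rewrite Nat.add_1_r, (psum_shift u (S n)), H0. ring. Qed.

Lemma isum_first u : (forall k, u (S k) = 0) -> infinite_sum u (u 0%nat).
Proof. intros H eps Heps. exists 0%nat. intros n _. replace (sum_f_R0 u n) with (u 0%nat).
  unfold Rdist; rewrite Rminus_diag, Rabs_R0; lra.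
  induction n; simpl; auto. rewrite H, IHn; ring. Qed.

Definition Ak d G k x (F : list nat -> R) : R :=
  lsum (fun s => if exits_at d G x s then (/ INR (2*d))^k * F s else 0) (words (2*d) k).

Lemma expect_Ak d G x F : expect d G x F = series_value (fun k => Ak d G k x F).
Proof. reflexivity. Qed.

Lemma forallb_map' {A B} (f : B -> bool) (g : A -> B) l : forallb f (map g l) = forallb (fun x => f (g x)) l.
Proof. induction l; simpl; auto. rewrite IHl; auto. Qed.

Lemma wpos_0 d x s : wpos d x s 0 = x.
Proof. reflexivity. Qed.
Lemma wpos_cons d x a s j : wpos d x (a :: s) (S j) = wpos d (vadd x (unitv d a)) s j.
Proof. reflexivity. Qed.

Lemma exits_nil d G x : exits_at d G x [] = negb (inG G x).
Proof. reflexivity. Qed.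

Lemma exits_cons d G x a s :
  exits_at d G x (a :: s) = andb (inG G x) (exits_at d G (vadd x (unitv d a)) s).
Proof.
  unfold exits_at. simpl length.
  replace (seq 0 (S (length s))) with (0%nat :: map S (seq 0 (length s))) by (simpl; rewrite seq_shift; auto).
  simpl forallb.
  rewrite forallb_map'. rewrite wpos_cons. rewrite wpos_0.
  destruct (inG G x); simpl; auto.
Qed.

Lemma Ak_0 d G x F : Ak d G 0 x F = if inG G x then 0 else F [].
Proof. unfold Ak. simpl words. rewrite lsum_cons, lsum_nil. rewrite exits_nil.
  destruct (inG G x); simpl; ring. Qed.

Lemma Ak_S d G k x F : inG G x = true ->
  Ak d G (S k) x F = / INR (2*d) * lsum (fun a => Ak d G k (vadd x (unitv d a)) (fun s => F (a :: s))) (seq 0 (2*d)).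
Proof.
  intros Hx. unfold Ak at 1. simpl words. rewrite lsum_flat_map. rewrite <- lsum_scal.
  apply lsum_ext. intros a _. rewrite lsum_map. unfold Ak. rewrite <- lsum_scal.
  apply lsum_ext. intros s _. rewrite exits_cons, Hx. simpl andb.
  destruct (exits_at d G (vadd x (unitv d a)) s); simpl; ring.
Qed.

Lemma Ak_S_out d G k x F : inG G x = false -> Ak d G (S k) x F = 0.
Proof.
  intros Hx. unfold Ak. transitivity (lsum (fun _ : list nat => 0) (words (2*d) (S k))); [|apply lsum_zero]. apply lsum_ext.
  intros s Hs. simpl in Hs. apply in_flat_map in Hs. destruct Hs as [a [_ Ha]].
  apply in_map_iff in Ha. destruct Ha as [s' [<- _]]. rewrite exits_cons, Hx. reflexivity.
Qed.

Lemma Ak_ext d G k x F F' : (forall s, F s = F' s) -> Ak d G k x F = Ak d G k x F'.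
Proof. intros H. replace F' with F; auto. apply functional_extensionality; auto. Qed.

Lemma Ak_plus d G k x F F' : Ak d G k x (fun s => F s + F' s) = Ak d G k x F + Ak d G k x F'.
Proof. unfold Ak. rewrite <- lsum_plus. apply lsum_ext; intros s _.
  destruct (exits_at d G x s); ring. Qed.
Lemma Ak_scal d G k x F c : Ak d G k x (fun s => c * F s) = c * Ak d G k x F.
Proof. unfold Ak. rewrite <- lsum_scal. apply lsum_ext; intros s _.
  destruct (exits_at d G x s); ring. Qed.
Lemma Ak_zero d G k x : Ak d G k x (fun _ => 0) = 0.
Proof. unfold Ak. transitivity (lsum (fun _ : list nat => 0) (words (2*d) k)); [|apply lsum_zero]. apply lsum_ext; intros s _.
  destruct (exits_at d G x s); ring. Qed.
Lemma Ak_lsum {A} d G k x (F : A -> list nat -> R) l :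
  Ak d G k x (fun s => lsum (fun i => F i s) l) = lsum (fun i => Ak d G k x (F i)) l.
Proof. induction l.
  - rewrite (Ak_ext _ _ _ _ _ (fun _ => 0)); [apply Ak_zero| reflexivity].
  - rewrite lsum_cons. rewrite (Ak_ext _ _ _ _ _ (fun s => F a s + lsum (fun i => F i s) l)).
    rewrite Ak_plus, IHl; reflexivity. intros s; rewrite lsum_cons; reflexivity. Qed.
Lemma pinv_nonneg n : 0 <= / INR n.
Proof. destruct n. simpl. rewrite Rinv_0; lra. left; apply Rinv_0_lt_compat, lt_0_INR; lia. Qed.

Lemma Ak_const_nonneg d G k x : 0 <= Ak d G k x (fun _ => 1).
Proof. unfold Ak. apply lsum_nonneg. intros s _. destruct (exits_at d G x s); [|lra].
  rewrite Rmult_1_r. apply pow_le. apply pinv_nonneg. Qed.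

Lemma Ak_abs d G k x F : Rabs (Ak d G k x F) <= Ak d G k x (fun s => Rabs (F s)).
Proof. unfold Ak. eapply Rle_trans; [apply lsum_abs|]. apply lsum_le. intros s _.
  destruct (exits_at d G x s). rewrite Rabs_mult, (Rabs_right ((/ INR (2*d))^k)). lra.
  apply Rle_ge, pow_le, pinv_nonneg. rewrite Rabs_R0; lra. Qed.

Lemma inG_true G y : inG G y = true <-> In y G.
Proof. unfold inG. destruct (in_dec _ y G); split; auto; discriminate. Qed.
Lemma inG_false G y : inG G y = false <-> ~ In y G.
Proof. unfold inG. destruct (in_dec _ y G); split; auto; try tauto; discriminate. Qed.

Definition sh d (z : list Z) := vadd z (unitv d 0).

Lemma vadd_zero (y z : list Z) : length y = length z -> (forall c, In c z -> c = 0%Z) -> vadd y z = y.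
Proof. revert z; induction y; intros [|c z] Hl Hz; simpl in *; try lia; auto.
  unfold vadd in *; simpl. rewrite (Hz c) by auto. f_equal. lia.
  apply IHy; auto. Qed.

Lemma sh_shape d' c ys : length ys = d' -> sh (S d') (c :: ys) = (c + 1)%Z :: ys.
Proof. intros Hl. unfold sh, unitv. simpl seq. simpl map. unfold vadd at 1. simpl combine. simpl map.
  f_equal. fold (vadd ys (map (fun i => if Nat.eqb i 0 then 1%Z else 0%Z) (seq 1 d'))).
  apply vadd_zero. rewrite length_map, length_seq; auto.
  intros c' Hc. apply in_map_iff in Hc. destruct Hc as [i [<- Hi]]. apply in_seq in Hi.
  destruct i; [lia|reflexivity]. Qed.

Lemma iter_shape d' c ys j : length ys = d' -> Nat.iter j (sh (S d')) (c :: ys) = (c + Z.of_nat j)%Z :: ys.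
Proof. intros Hl. induction j. simpl. f_equal; lia.
  simpl Nat.iter. rewrite IHj, sh_shape by auto. f_equal. lia. Qed.

Lemma pigeon d G : (1 <= d)%nat -> (forall y, In y G -> length y = d) ->
  forall y, exists j, (j <= length G)%nat /\ inG G (Nat.iter j (sh d) y) = false.
Proof.
  intros Hd HG y. destruct (inG G y) eqn:Hy. 2:{ exists 0%nat; split; [lia|exact Hy]. }
  apply inG_true in Hy. pose proof (HG _ Hy) as Hl. destruct d as [|d']; [lia|].
  destruct y as [|c ys]; [simpl in Hl; lia|]. simpl in Hl. injection Hl as Hl.
  apply NNPP; intros Hno.
  assert (Hall : forall j, (j <= length G)%nat -> In (Nat.iter j (sh (S d')) (c :: ys)) G).
  { intros j Hj. apply inG_true. destruct (inG G _) eqn:E; auto. exfalso; apply Hno; exists j; auto. }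
  pose (l := map (fun j => Nat.iter j (sh (S d')) (c :: ys)) (seq 0 (S (length G)))).
  assert (NoDup l).
  { apply NoDup_map_NoDup_ForallPairs; [|apply seq_NoDup].
    intros j1 j2 _ _ E. rewrite !iter_shape in E by auto. injection E; lia. }
  assert (incl l G).
  { intros z Hz. apply in_map_iff in Hz. destruct Hz as [j [<- Hj]]. apply in_seq in Hj. apply Hall; lia. }
  pose proof (NoDup_incl_length H H0). unfold l in H1. rewrite length_map, length_seq in H1. lia.
Qed.

Fixpoint cseq (p M : R) (t : nat) : R :=
  match t with O => M - 1 | S t => p * cseq p M t - 1 end.

Lemma lsum_seq0 (f : nat -> R) n : lsum f (seq 0 (S n)) = f 0%nat + lsum f (seq 1 n).
Proof. reflexivity. Qed.

Lemma lyap d G : (1 <= d)%nat -> (forall y, In y G -> length y = d) ->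
  exists M, 0 <= M /\ forall (W : nat -> list Z -> R) kap, 0 <= kap ->
  (forall x, W 0%nat x <= 0) ->
  (forall N x, W (S N) x <= kap + (if inG G x then / INR (2*d) * lsum (fun a => W N (vadd x (unitv d a))) (seq 0 (2*d)) else 0)) ->
  forall N x, W N x <= kap * M.
Proof.
  intros Hd HG.
  set (q := INR (2*d)). set (p := / q). set (T := length G).
  assert (Hq : 2 <= q). { unfold q. replace 2 with (INR 2) by (simpl; ring). apply le_INR; lia. }
  assert (Hpq : p * q = 1). { unfold p. field. lra. }
  assert (Hp0 : 0 < p). { unfold p. apply Rinv_0_lt_compat; lra. }
  assert (Hp1 : p <= 1). { nra. }
  assert (HpT : 0 < p ^ T) by (apply pow_lt; auto).
  set (M := 1 + INR T / p ^ T).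
  assert (HM1 : 0 <= M - 1). { unfold M. assert (0 <= INR T) by apply pos_INR. unfold Rdiv.
     assert (0 < / p^T) by (apply Rinv_0_lt_compat; auto). nra. }
  assert (Hcup : forall t, cseq p M t <= M - 1).
  { induction t; simpl; [lra|]. nra. }
  assert (Hclow : forall t, p ^ t * (M - 1) - INR t <= cseq p M t).
  { induction t; [simpl; lra|]. change (cseq p M (S t)) with (p * cseq p M t - 1).
    replace (p ^ S t) with (p * p^t) by (simpl; ring). rewrite S_INR. assert (0 <= INR t) by apply pos_INR. nra. }
  assert (HcT : 0 <= cseq p M T).
  { pose proof (Hclow T). replace (p ^ T * (M - 1)) with (INR T) in H. lra.
    unfold M. field. lra. }
  exists M. split; [lra|]. intros W kap Hk H0 HS.
  assert (Hmain : forall N t x, (exists j, (j <= t)%nat /\ inG G (Nat.iter j (sh d) x) = false) ->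
                   W N x <= kap * (M - cseq p M t)).
  { induction N.
    - intros t x _. pose proof (H0 x). pose proof (Hcup t). nra.
    - assert (Hall : forall y, W N y <= kap * M).
      { intros y. destruct (pigeon d G Hd HG y) as [j [Hj Hj']].
        pose proof (IHN T y (ex_intro _ j (conj Hj Hj'))). nra. }
      intros t x [j [Hj Hj']].
      pose proof (HS N x) as HSx. pose proof (Hcup t).
      destruct (inG G x) eqn:Hx. 2:{ nra. }
      destruct j as [|j]. { simpl in Hj'. congruence. }
      destruct t as [|t]; [lia|].
      rewrite Nat.iter_succ_r in Hj'.
      assert (HW0 : W N (sh d x) <= kap * (M - cseq p M t)).
      { apply IHN. exists j; split; [lia|]. exact Hj'. }
      destruct d as [|d']; [lia|].
      replace (2 * S d')%nat with (S (S (2 * d'))) in HSx by lia.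
      rewrite lsum_seq0 in HSx.
      assert (Hrest : lsum (fun a => W N (vadd x (unitv (S d') a))) (seq 1 (S (2*d'))) <= INR (length (seq 1 (S (2*d')))) * (kap * M)).
      { apply lsum_const_le. intros; apply Hall. }
      rewrite length_seq in Hrest.
      replace (/ INR (S (S (2 * d')))) with p in HSx by (unfold p, q; f_equal; f_equal; lia).
      assert (Hq' : q = INR (S (2*d')) + 1). { unfold q. rewrite <- S_INR. f_equal. lia. }
      unfold sh in HW0.
      simpl cseq.
      assert (p * (W N (vadd x (unitv (S d') 0)) + lsum (fun a => W N (vadd x (unitv (S d') a))) (seq 1 (S (2 * d'))))
              <= p * (kap * (M - cseq p M t) + INR (S (2*d')) * (kap * M))).
      { apply Rmult_le_compat_l; lra. }
      assert (E2 : p * INR (S (2*d')) = 1 - p) by nra.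
      assert (E : p * (kap * (M - cseq p M t) + INR (S (2*d')) * (kap * M)) = kap * M - kap * (p * cseq p M t)).
      { transitivity (p * (kap * (M - cseq p M t)) + (p * INR (S (2*d'))) * (kap * M)); [ring|]. rewrite E2; ring. }
      lra. }
  intros N y. destruct (pigeon d G Hd HG y) as [j [Hj Hj']].
  pose proof (Hmain N T y (ex_intro _ j (conj Hj Hj'))). nra.
Qed.

Lemma psum_zero N : psum (fun _ => 0) N = 0.
Proof. induction N; simpl; [ring|]. rewrite IHN; ring. Qed.
Lemma psum_ext u v N : (forall k, u k = v k) -> psum u N = psum v N.
Proof. intros H; induction N; simpl; auto. rewrite IHN, H; auto. Qed.

Lemma lsum_const {A} c (l : list A) : lsum (fun _ => c) l = INR (length l) * c.
Proof. induction l; [unfold lsum; simpl; ring|]. rewrite lsum_cons, IHl. simpl length. rewrite S_INR; ring. Qed.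

Lemma p2d d : (1 <= d)%nat -> / INR (2*d) * INR (2*d) = 1.
Proof. intros. field. apply not_0_INR. lia. Qed.

Lemma psum_nonneg u N : (forall k, 0 <= u k) -> 0 <= psum u N.
Proof. intros H; induction N; simpl; [lra|]. specialize (H N); lra. Qed.

Lemma psum_Ak_S d G x F N : inG G x = true ->
  psum (fun k => Ak d G (S k) x F) N =
  / INR (2*d) * lsum (fun a => psum (fun k => Ak d G k (vadd x (unitv d a)) (fun s => F (a :: s))) N) (seq 0 (2*d)).
Proof. intros Hx. rewrite (psum_ext _ (fun k => / INR (2*d) * lsum (fun a => Ak d G k (vadd x (unitv d a)) (fun s => F (a :: s))) (seq 0 (2*d)))).
  rewrite psum_scal, psum_lsum. reflexivity. intros; apply Ak_S; auto. Qed.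

Lemma psum_Ak_S_out d G x F N : inG G x = false -> psum (fun k => Ak d G (S k) x F) N = 0.
Proof. intros Hx. rewrite (psum_ext _ (fun _ => 0)). apply psum_zero. intros; apply Ak_S_out; auto. Qed.

Lemma conv1 d G : (1 <= d)%nat -> (forall y, In y G -> length y = d) ->
  exists C, 0 <= C /\ forall N x, psum (fun k => Ak d G k x (fun _ => 1)) N <= C.
Proof.
  intros Hd HG. destruct (lyap d G Hd HG) as [M [HM HL]]. exists (1 * M). split; [lra|].
  apply HL; [lra| intros; simpl; lra|].
  intros N x. rewrite psum_shift, Ak_0. destruct (inG G x) eqn:Hx.
  - rewrite psum_Ak_S by auto. lra.
  - rewrite psum_Ak_S_out by auto. lra.
Qed.

Fixpoint Sk d G (k : nat) (x : list Z) : R :=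
  match k with
  | O => 1
  | S k => if inG G x then / INR (2*d) * lsum (fun a => Sk d G k (vadd x (unitv d a))) (seq 0 (2*d)) else 0
  end.

Lemma Sk_nonneg d G k x : 0 <= Sk d G k x.
Proof. revert x; induction k; intros x; simpl; [lra|]. destruct (inG G x); [|lra].
  apply Rmult_le_pos; [apply pinv_nonneg| apply lsum_nonneg; auto]. Qed.

Lemma harm_zero d G : (1 <= d)%nat -> (forall y, In y G -> length y = d) ->
  forall D : list Z -> R,
  (forall x, inG G x = false -> D x = 0) ->
  (forall x, inG G x = true -> D x = / INR (2*d) * lsum (fun a => D (vadd x (unitv d a))) (seq 0 (2*d))) ->
  forall x, D x = 0.
Proof.
  intros Hd HG D Hout Hin.
  set (MD := lsum (fun y => Rabs (D y)) G).
  assert (HMD : 0 <= MD) by (apply lsum_nonneg; intros; apply Rabs_pos).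
  assert (Hb : forall k x, Rabs (D x) <= MD * Sk d G k x).
  { induction k; intros x.
    - simpl. destruct (inG G x) eqn:Hx.
      + apply inG_true in Hx. rewrite Rmult_1_r. apply (lsum_in_le (fun y => Rabs (D y))); auto. intros; apply Rabs_pos.
      + rewrite Hout by auto. rewrite Rabs_R0. lra.
    - cbn [Sk]. destruct (inG G x) eqn:Hx.
      + rewrite Hin by auto. rewrite Rabs_mult, (Rabs_right (/ _)) by (apply Rle_ge, pinv_nonneg).
        eapply Rle_trans. apply Rmult_le_compat_l; [apply pinv_nonneg| apply lsum_abs].
        eapply Rle_trans. apply Rmult_le_compat_l; [apply pinv_nonneg|].
        apply (lsum_le _ (fun a => MD * Sk d G k (vadd x (unitv d a)))); intros; apply IHk.
        rewrite lsum_scal. right; ring.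
      + rewrite Hout by auto. rewrite Rabs_R0. lra. }
  destruct (lyap d G Hd HG) as [M [HM HL]].
  assert (HY : forall N x, psum (fun k => Sk d G k x) N <= 1 * M).
  { apply HL; [lra| intros; simpl; lra|]. intros N x. rewrite psum_shift. cbn [Sk].
    destruct (inG G x) eqn:Hx.
    - rewrite psum_scal, psum_lsum. lra.
    - rewrite psum_zero; lra. }
  intros x. apply NNPP. intros Hne.
  assert (Hpos : 0 < Rabs (D x)) by (apply Rabs_pos_lt; auto).
  assert (HN : forall N, INR N * Rabs (D x) <= MD * M).
  { intros N. eapply Rle_trans with (psum (fun k => MD * Sk d G k x) N).
    - clear HY. induction N. simpl; lra. simpl psum. rewrite S_INR. pose proof (Hb N x). lra.
    - rewrite psum_scal. pose proof (HY N x). nra. }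
  destruct (archimed_cor1 (Rabs (D x) / (MD * M + 1))) as [N [HN1 HN2]].
  { apply Rdiv_lt_0_compat; nra. }
  pose proof (HN N).
  assert (0 < INR N) by (apply lt_0_INR; auto).
  assert (Hinv : / INR N * INR N = 1) by (field; lra).
  assert (Hk : / INR N * (MD * M + 1) < Rabs (D x)).
  { apply (Rmult_lt_compat_r (MD * M + 1)) in HN1; [|nra].
    unfold Rdiv in HN1. rewrite Rmult_assoc, Rinv_l in HN1 by nra. lra. }
  assert (Hm : INR N * (/ INR N * (MD*M+1)) < INR N * Rabs (D x)) by (apply Rmult_lt_compat_l; auto).
  replace (INR N * (/INR N * (MD*M+1))) with (MD*M+1) in Hm by (field; lra). lra.
Qed.

Lemma unitv_entry d a i : Rabs (IZR (nth i (unitv d a) 0%Z)) <= 1.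
Proof.
  destruct (nth_in_or_default i (unitv d a) 0%Z) as [Hin|Hdef].
  - set (c := nth i (unitv d a) 0%Z) in *. unfold unitv in Hin. apply in_map_iff in Hin.
    destruct Hin as [j [Hj _]]. rewrite <- Hj.
    destruct (Nat.eqb j (Nat.div a 2)); [destruct (Nat.even a)|].
    + apply Rabs_le; lra.
    + apply Rabs_le; lra.
    + apply Rabs_le; lra.
  - rewrite Hdef. rewrite Rabs_R0; lra.
Qed.

Lemma texp_abs d a u : Rabs (texp (unitv d a) u) <= 1.
Proof.
  unfold texp. unfold Rdiv. rewrite Rabs_mult.
  assert (H1 : Rabs (fold_right Rmult 1 (map (fun i => IZR (nth i (unitv d a) 0%Z)) u)) <= 1).
  { induction u; simpl. rewrite Rabs_R1; lra. rewrite Rabs_mult.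
    pose proof (unitv_entry d a a0). pose proof (Rabs_pos (IZR (nth a0 (unitv d a) 0%Z))).
    pose proof (Rabs_pos (fold_right Rmult 1 (map (fun i => IZR (nth i (unitv d a) 0%Z)) u))). nra. }
  assert (H2 : Rabs (/ INR (fact (length u))) <= 1).
  { pose proof (lt_O_fact (length u)). assert (1 <= INR (fact (length u))).
    { replace 1 with (INR 1) by reflexivity. apply le_INR; lia. }
    rewrite Rabs_right. rewrite <- Rinv_1. apply Rinv_le_contravar; lra.
    apply Rle_ge; left; apply Rinv_0_lt_compat; lra. }
  pose proof (Rabs_pos (/ INR (fact (length u)))).
  pose proof (Rabs_pos (fold_right Rmult 1 (map (fun i => IZR (nth i (unitv d a) 0%Z)) u))). nra.
Qed.

Lemma sig_cons d a s w : sig d (a :: s) w =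
  lsum (fun i => texp (unitv d a) (firstn i w) * sig d s (skipn i w)) (seq 0 (S (length w))).
Proof. reflexivity. Qed.

Lemma Ak_sig_S d G k x w : inG G x = true ->
  Ak d G (S k) x (fun s => sig d s w) =
  / INR (2*d) * lsum (fun a => lsum (fun i => texp (unitv d a) (firstn i w) *
        Ak d G k (vadd x (unitv d a)) (fun s => sig d s (skipn i w))) (seq 0 (S (length w)))) (seq 0 (2*d)).
Proof.
  intros Hx. rewrite Ak_S by auto. f_equal. apply lsum_ext; intros a _.
  rewrite (Ak_ext _ _ _ _ _ (fun s => lsum (fun i => texp (unitv d a) (firstn i w) * sig d s (skipn i w)) (seq 0 (S (length w))))) by (intros; reflexivity).
  rewrite Ak_lsum. apply lsum_ext; intros i _. apply Ak_scal.
Qed.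

Lemma Ak_sig_S_abs d G k x w : inG G x = true ->
  Rabs (Ak d G (S k) x (fun s => sig d s w)) <=
  / INR (2*d) * lsum (fun a => lsum (fun i =>
        Rabs (Ak d G k (vadd x (unitv d a)) (fun s => sig d s (skipn i w)))) (seq 0 (S (length w)))) (seq 0 (2*d)).
Proof.
  intros Hx. rewrite Ak_sig_S by auto. rewrite Rabs_mult, Rabs_right by (apply Rle_ge, pinv_nonneg).
  apply Rmult_le_compat_l; [apply pinv_nonneg|].
  eapply Rle_trans; [apply lsum_abs|]. apply lsum_le; intros a _.
  eapply Rle_trans; [apply lsum_abs|]. apply lsum_le; intros i _.
  rewrite Rabs_mult. pose proof (texp_abs d a (firstn i w)).
  pose proof (Rabs_pos (Ak d G k (vadd x (unitv d a)) (fun s => sig d s (skipn i w)))).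
  pose proof (Rabs_pos (texp (unitv d a) (firstn i w))). nra.
Qed.

Definition Vs d G w N x := psum (fun k => Rabs (Ak d G k x (fun s => sig d s w))) N.

Lemma sig_core d G : (1 <= d)%nat -> (forall y, In y G -> length y = d) ->
  exists M, 0 <= M /\ forall w C0, 0 <= C0 ->
   (forall w', (length w' < length w)%nat -> forall N x, Vs d G w' N x <= C0) ->
   forall N x, Vs d G w N x <= (1 + INR (length w) * C0) * M.
Proof.
  intros Hd HG. destruct (lyap d G Hd HG) as [M [HM HL]]. exists M; split; auto.
  intros w C0 HC0 IH. assert (0 <= INR (length w)) by apply pos_INR.
  apply HL; [nra| intros; unfold Vs; simpl; lra|].
  intros N x. unfold Vs at 1. rewrite psum_shift.
  assert (H0 : Rabs (Ak d G 0 x (fun s => sig d s w)) <= 1).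
  { rewrite Ak_0. destruct (inG G x). rewrite Rabs_R0; lra. simpl. destruct w; simpl.
    rewrite Rabs_R1; lra. rewrite Rabs_R0; lra. }
  destruct (inG G x) eqn:Hx.
  - assert (H1 : psum (fun k => Rabs (Ak d G (S k) x (fun s => sig d s w))) N <=
       / INR (2*d) * lsum (fun a => lsum (fun i => Vs d G (skipn i w) N (vadd x (unitv d a))) (seq 0 (S (length w)))) (seq 0 (2*d))).
    { eapply Rle_trans. apply psum_le. intros k. apply Ak_sig_S_abs; auto.
      rewrite psum_scal, psum_lsum. right. f_equal. apply lsum_ext; intros a _.
      rewrite psum_lsum. reflexivity. }
    assert (H2 : / INR (2*d) * lsum (fun a => lsum (fun i => Vs d G (skipn i w) N (vadd x (unitv d a))) (seq 0 (S (length w)))) (seq 0 (2*d))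
       <= / INR (2*d) * lsum (fun a => Vs d G w N (vadd x (unitv d a)) + INR (length w) * C0) (seq 0 (2*d))).
    { apply Rmult_le_compat_l; [apply pinv_nonneg|]. apply lsum_le; intros a _.
      rewrite lsum_seq0. simpl skipn. apply Rplus_le_compat_l.
      replace (INR (length w)) with (INR (length (seq 1 (length w)))) by (rewrite length_seq; auto). apply lsum_const_le. intros i Hi.
      apply in_seq in Hi. apply IH. rewrite length_skipn. lia. }
    rewrite lsum_plus, lsum_const, length_seq, Rmult_plus_distr_l in H2.
    rewrite <- Rmult_assoc, p2d in H2 by auto. lra.
  - rewrite (psum_ext _ (fun _ => 0)). rewrite psum_zero. assert (0 <= INR (length w) * C0) by nra. lra.
    intros k. rewrite Ak_S_out by auto. apply Rabs_R0.
Qed.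

Lemma sig_all d G : (1 <= d)%nat -> (forall y, In y G -> length y = d) ->
  forall n, exists C, 0 <= C /\ forall w, (length w < n)%nat -> forall N x, Vs d G w N x <= C.
Proof.
  intros Hd HG. destruct (sig_core d G Hd HG) as [M [HM HC]].
  induction n.
  - exists 0. split; [lra|]. intros; lia.
  - destruct IHn as [C [HC0 HCn]].
    exists (Rmax C ((1 + INR n * C) * M)). split. eapply Rle_trans; [|apply Rmax_l]; auto.
    intros w Hw N x. destruct (Nat.eq_dec (length w) n) as [E|E].
    + eapply Rle_trans; [|apply Rmax_r]. rewrite <- E. apply HC; auto. intros; apply HCn; lia.
    + eapply Rle_trans; [|apply Rmax_l]. apply HCn; lia.
Qed.

Lemma conv_sig d G : (1 <= d)%nat -> (forall y, In y G -> length y = d) ->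
  forall w x, exists l, infinite_sum (fun k => Ak d G k x (fun s => sig d s w)) l.
Proof.
  intros Hd HG w x. destruct (sig_all d G Hd HG (S (length w))) as [C [_ HC]].
  apply (abs_conv _ C). intros N. apply (HC w); auto.
Qed.

Lemma Phi_isum d G : (1 <= d)%nat -> (forall y, In y G -> length y = d) ->
  forall w x, infinite_sum (fun k => Ak d G k x (fun s => sig d s w)) (Phi d G x w).
Proof.
  intros Hd HG w x. destruct (conv_sig d G Hd HG w x) as [l Hl].
  replace (Phi d G x w) with l; auto. symmetry. apply sv_eq; auto.
Qed.

Lemma Phi_out d G x w : inG G x = false -> Phi d G x w = tunit w.
Proof.
  intros Hx. change (Phi d G x w) with (series_value (fun k => Ak d G k x (fun s => sig d s w))).
  apply sv_eq. replace (tunit w) with (Ak d G 0 x (fun s => sig d s w)).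
  apply isum_first. intros; apply Ak_S_out; auto.
  rewrite Ak_0, Hx. reflexivity.
Qed.

Lemma Phi_step d G : (1 <= d)%nat -> (forall y, In y G -> length y = d) ->
  forall x w, inG G x = true ->
  Phi d G x w = / INR (2*d) * lsum (fun a => lsum (fun i => texp (unitv d a) (firstn i w) *
        Phi d G (vadd x (unitv d a)) (skipn i w)) (seq 0 (S (length w)))) (seq 0 (2*d)).
Proof.
  intros Hd HG x w Hx. change (Phi d G x w) with (series_value (fun k => Ak d G k x (fun s => sig d s w))).
  apply sv_eq. apply isum_shift. rewrite Ak_0, Hx; reflexivity.
  apply (isum_ext (fun k => / INR (2*d) * lsum (fun a => lsum (fun i => texp (unitv d a) (firstn i w) *
        Ak d G k (vadd x (unitv d a)) (fun s => sig d s (skipn i w))) (seq 0 (S (length w)))) (seq 0 (2*d)))).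
  intros k; symmetry; apply Ak_sig_S; auto.
  apply isum_scal. apply isum_lsum. intros a _. apply isum_lsum. intros i _.
  apply isum_scal. apply Phi_isum; auto.
Qed.

Lemma texp_nil v : texp v [] = 1.
Proof. unfold texp. simpl. unfold Rdiv. rewrite Rinv_1. ring. Qed.
Lemma texp_one v i : texp v [i] = IZR (nth i v 0%Z).
Proof. unfold texp. simpl. unfold Rdiv. rewrite Rinv_1. ring. Qed.

Lemma avg_const d (f : nat -> R) c : (1 <= d)%nat ->
  / INR (2*d) * lsum (fun a => f a + c) (seq 0 (2*d)) = / INR (2*d) * lsum f (seq 0 (2*d)) + c.
Proof. intros Hd. rewrite lsum_plus, lsum_const, length_seq. pose proof (p2d d Hd).
  transitivity (/ INR (2*d) * lsum f (seq 0 (2*d)) + (/ INR (2*d) * INR (2*d)) * c); [ring|]. rewrite H; ring. Qed.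

Lemma Phi_nil d G : (1 <= d)%nat -> (forall y, In y G -> length y = d) -> forall x, Phi d G x [] = 1.
Proof.
  intros Hd HG x. cut (Phi d G x [] - 1 = 0). lra. revert x.
  apply (harm_zero d G Hd HG (fun x => Phi d G x [] - 1)).
  - intros x Hx. rewrite Phi_out by auto. simpl. ring.
  - intros x Hx. cbv beta. rewrite Phi_step by auto. simpl length.
    rewrite (lsum_ext _ (fun a => Phi d G (vadd x (unitv d a)) [])).
    2:{ intros a _. simpl seq. rewrite lsum_cons, lsum_nil. simpl firstn. simpl skipn. rewrite texp_nil. ring. }
    unfold Rminus. rewrite avg_const by auto. ring.
Qed.

Lemma unitv_nth d a i : (i < d)%nat ->
  nth i (unitv d a) 0%Z = if Nat.eqb i (Nat.div a 2) then (if Nat.even a then 1%Z else (-1)%Z) else 0%Z.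
Proof.
  intros Hi. unfold unitv.
  set (f := fun i0 => if Nat.eqb i0 (Nat.div a 2) then (if Nat.even a then 1%Z else (-1)%Z) else 0%Z).
  transitivity (nth i (map f (seq 0 d)) (f 0%nat)).
  apply nth_indep. rewrite length_map, length_seq; auto.
  rewrite map_nth, seq_nth by auto. reflexivity.
Qed.

Lemma sum_unitv i D : lsum (fun a => IZR (if Nat.eqb i (Nat.div a 2) then (if Nat.even a then 1%Z else (-1)%Z) else 0%Z)) (seq 0 (2*D)) = 0.
Proof.
  induction D. reflexivity.
  replace (2 * S D)%nat with (2*D + 2)%nat by lia. rewrite seq_app, lsum_app, IHD.
  replace (seq (0 + 2*D) 2) with [2*D; S (2*D)]%nat by reflexivity. rewrite lsum_cons, lsum_cons, lsum_nil.
  replace (Nat.div (2*D) 2) with D by (apply (Nat.div_unique _ _ _ 0); lia).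
  replace (Nat.div (S (2*D)) 2) with D by (apply (Nat.div_unique _ _ _ 1); lia).
  replace (Nat.even (2*D)) with true by (rewrite Nat.even_mul; reflexivity).
  replace (Nat.even (S (2*D))) with false by (rewrite Nat.even_succ, Nat.odd_mul; reflexivity).
  destruct (Nat.eqb i D); [rewrite Rplus_0_r, <- plus_IZR; simpl; ring| ring].
Qed.

Lemma Phi_single d G : (1 <= d)%nat -> (forall y, In y G -> length y = d) ->
  forall i x, (i < d)%nat -> Phi d G x [i] = 0.
Proof.
  intros Hd HG i x Hi. revert x.
  apply (harm_zero d G Hd HG (fun x => Phi d G x [i])).
  - intros x Hx. rewrite Phi_out by auto. reflexivity.
  - intros x Hx. rewrite Phi_step by auto. f_equal. simpl length.
    rewrite (lsum_ext _ (fun a => Phi d G (vadd x (unitv d a)) [i] + IZR (nth i (unitv d a) 0%Z))).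
    2:{ intros a _. change (seq 0 2) with [0%nat;1%nat]. rewrite !lsum_cons, lsum_nil. simpl firstn. simpl skipn. rewrite texp_nil, texp_one, Phi_nil by auto. ring. }
    rewrite lsum_plus. rewrite (lsum_ext (fun a => IZR (nth i (unitv d a) 0%Z)) _ _ (fun a _ => f_equal IZR (unitv_nth d a i Hi))).
    rewrite sum_unitv. ring.
Qed.

Definition F2 d G (w : list nat) (x : list Z) (s : list nat) : R :=
  lsum (fun j => gfun d G (length w) (wpos d x s j) w) (seq 0 (length s)).

Lemma F2_cons d G w x a s : F2 d G w x (a :: s) = gfun d G (length w) x w + F2 d G w (vadd x (unitv d a)) s.
Proof.
  unfold F2. simpl length.
  replace (seq 0 (S (length s))) with (0%nat :: map S (seq 0 (length s))) by (simpl; rewrite seq_shift; auto).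
  rewrite lsum_cons, lsum_map. reflexivity.
Qed.

Lemma Ak_F2_S d G w k x : inG G x = true ->
  Ak d G (S k) x (F2 d G w x) = / INR (2*d) * lsum (fun a =>
     gfun d G (length w) x w * Ak d G k (vadd x (unitv d a)) (fun _ => 1) + Ak d G k (vadd x (unitv d a)) (F2 d G w (vadd x (unitv d a)))) (seq 0 (2*d)).
Proof.
  intros Hx. rewrite Ak_S by auto. f_equal. apply lsum_ext; intros a _.
  rewrite (Ak_ext _ _ _ _ _ (fun s => gfun d G (length w) x w * 1 + F2 d G w (vadd x (unitv d a)) s)).
  rewrite Ak_plus, Ak_scal. reflexivity. intros s. rewrite F2_cons. ring.
Qed.

Lemma Ak_F2_0 d G w x : Ak d G 0 x (F2 d G w x) = 0.
Proof. rewrite Ak_0. destruct (inG G x); reflexivity. Qed.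

Lemma conv_F2 d G : (1 <= d)%nat -> (forall y, In y G -> length y = d) ->
  forall w x, exists l, infinite_sum (fun k => Ak d G k x (F2 d G w x)) l.
Proof.
  intros Hd HG w.
  destruct (conv1 d G Hd HG) as [C1 [HC1 HC1']].
  set (g := fun y => gfun d G (length w) y w).
  set (Mg := lsum (fun y => Rabs (g y)) G).
  assert (HMg : 0 <= Mg) by (apply lsum_nonneg; intros; apply Rabs_pos).
  destruct (lyap d G Hd HG) as [M [HM HL]].
  assert (HW : forall N x, psum (fun k => Rabs (Ak d G k x (F2 d G w x))) N <= (Mg * C1) * M).
  { apply HL; [nra| intros; simpl; lra|]. intros N x. rewrite psum_shift, Ak_F2_0, Rabs_R0.
    destruct (inG G x) eqn:Hx.
    - rewrite Rplus_0_l. assert (Hg : Rabs (g x) <= Mg). { apply (lsum_in_le (fun y => Rabs (g y))). intros; apply Rabs_pos. apply inG_true; auto. }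
      eapply Rle_trans. apply (psum_le _ (fun k => / INR (2*d) * lsum (fun a =>
           Rabs (g x) * Ak d G k (vadd x (unitv d a)) (fun _ => 1) + Rabs (Ak d G k (vadd x (unitv d a)) (F2 d G w (vadd x (unitv d a))))) (seq 0 (2*d)))).
      { intros k. rewrite Ak_F2_S by auto. rewrite Rabs_mult, Rabs_right by (apply Rle_ge, pinv_nonneg).
        apply Rmult_le_compat_l; [apply pinv_nonneg|]. eapply Rle_trans; [apply lsum_abs|].
        apply lsum_le; intros a _. eapply Rle_trans; [apply Rabs_triang|]. rewrite Rabs_mult.
        rewrite (Rabs_right (Ak _ _ _ _ _)) by (apply Rle_ge, Ak_const_nonneg). fold (g x). lra. }
      rewrite psum_scal, psum_lsum.
      rewrite (lsum_ext (fun a => psum _ N) (fun a => Rabs (g x) * psum (fun k => Ak d G k (vadd x (unitv d a)) (fun _ => 1)) N +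
               psum (fun k => Rabs (Ak d G k (vadd x (unitv d a)) (F2 d G w (vadd x (unitv d a))))) N)).
      2:{ intros a _. rewrite psum_plus, psum_scal. reflexivity. }
      rewrite lsum_plus, Rmult_plus_distr_l.
      assert (lsum (fun a => Rabs (g x) * psum (fun k => Ak d G k (vadd x (unitv d a)) (fun _ => 1)) N) (seq 0 (2*d))
              <= INR (length (seq 0 (2*d))) * (Mg * C1)).
      { apply lsum_const_le. intros a _. pose proof (HC1' N (vadd x (unitv d a))). apply Rmult_le_compat; auto.
        apply Rabs_pos. apply psum_nonneg; intros; apply Ak_const_nonneg. }
      rewrite length_seq in H.
      assert (/ INR (2*d) * lsum (fun a => Rabs (g x) * psum (fun k => Ak d G k (vadd x (unitv d a)) (fun _ => 1)) N) (seq 0 (2*d))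
              <= / INR (2*d) * (INR (2*d) * (Mg * C1))) by (apply Rmult_le_compat_l; auto; apply pinv_nonneg).
      rewrite <- Rmult_assoc, p2d in H0 by auto. lra.
    - rewrite (psum_ext _ (fun _ => 0)). rewrite psum_zero. nra. intros k. rewrite Ak_S_out by auto. apply Rabs_R0. }
  intros x. apply (abs_conv _ ((Mg * C1) * M)). intros N; apply HW.
Qed.

Definition Hh d G w x := expect d G x (F2 d G w x).

Lemma H_isum d G : (1 <= d)%nat -> (forall y, In y G -> length y = d) ->
  forall w x, infinite_sum (fun k => Ak d G k x (F2 d G w x)) (Hh d G w x).
Proof.
  intros Hd HG w x. destruct (conv_F2 d G Hd HG w x) as [l Hl].
  replace (Hh d G w x) with l; auto. symmetry. apply sv_eq; auto.
Qed.

Lemma H_out d G w x : inG G x = false -> Hh d G w x = 0.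
Proof.
  intros Hx. unfold Hh. rewrite expect_Ak. apply sv_eq. rewrite <- (Ak_F2_0 d G w x).
  apply isum_first. intros; apply Ak_S_out; auto.
Qed.

Lemma sig_nil_w d s : sig d s [] = 1.
Proof. induction s; [reflexivity|]. rewrite sig_cons. change (seq 0 (S (length (@nil nat)))) with [0%nat]. rewrite lsum_cons, lsum_nil. simpl firstn; simpl skipn. rewrite texp_nil, IHs. ring. Qed.

Lemma H_step d G : (1 <= d)%nat -> (forall y, In y G -> length y = d) ->
  forall w x, inG G x = true ->
  Hh d G w x = gfun d G (length w) x w + / INR (2*d) * lsum (fun a => Hh d G w (vadd x (unitv d a))) (seq 0 (2*d)).
Proof.
  intros Hd HG w x Hx.
  transitivity (/ INR (2*d) * lsum (fun a => gfun d G (length w) x w * Phi d G (vadd x (unitv d a)) [] + Hh d G w (vadd x (unitv d a))) (seq 0 (2*d))).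
  - unfold Hh at 1. rewrite expect_Ak. apply sv_eq. apply isum_shift. apply Ak_F2_0.
    apply (isum_ext (fun k => / INR (2*d) * lsum (fun a =>
     gfun d G (length w) x w * Ak d G k (vadd x (unitv d a)) (fun _ => 1) + Ak d G k (vadd x (unitv d a)) (F2 d G w (vadd x (unitv d a)))) (seq 0 (2*d)))).
    intros k; symmetry; apply Ak_F2_S; auto.
    apply isum_scal. apply isum_lsum. intros a _. apply isum_plus.
    + apply isum_scal. apply (isum_ext (fun k => Ak d G k (vadd x (unitv d a)) (fun s => sig d s []))).
      intros k; apply Ak_ext; intros; apply sig_nil_w. apply Phi_isum; auto.
    + apply H_isum; auto.
  - rewrite (lsum_ext _ (fun a => gfun d G (length w) x w + Hh d G w (vadd x (unitv d a)))).
    2:{ intros a _. rewrite Phi_nil by auto. ring. }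
    rewrite (lsum_ext _ (fun a => Hh d G w (vadd x (unitv d a)) + gfun d G (length w) x w)) by (intros; ring).
    rewrite avg_const by auto. ring.
Qed.

Lemma Phi_main d G : (1 <= d)%nat -> (forall y, In y G -> length y = d) ->
  forall x w, inG G x = true ->
  Phi d G x w = gfun d G (length w) x w + / INR (2*d) * lsum (fun a => Phi d G (vadd x (unitv d a)) w) (seq 0 (2*d)).
Proof.
  intros Hd HG x w Hx. rewrite Phi_step by auto. unfold gfun.
  rewrite (lsum_ext (fun a => lsum _ (seq 0 (S (length w))))
    (fun a => Phi d G (vadd x (unitv d a)) w + lsum (fun i => texp (unitv d a) (firstn i w) *
        Phi d G (vadd x (unitv d a)) (skipn i w)) (seq 1 (length w)))).
  2:{ intros a _. rewrite lsum_seq0. simpl firstn. simpl skipn. rewrite texp_nil. ring. }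
  rewrite lsum_plus, lsum_scal. ring.
Qed.

Lemma main_id d G : (1 <= d)%nat -> (forall y, In y G -> length y = d) ->
  forall w x, w <> [] -> Phi d G x w = Hh d G w x.
Proof.
  intros Hd HG w x Hw. cut (Phi d G x w - Hh d G w x = 0). lra. revert x.
  apply (harm_zero d G Hd HG (fun x => Phi d G x w - Hh d G w x)).
  - intros x Hx. cbv beta. rewrite Phi_out, H_out by auto. destruct w; [congruence|]. simpl; ring.
  - intros x Hx. cbv beta. rewrite Phi_main, H_step by auto.
    unfold Rminus. rewrite (lsum_ext (fun a => Phi d G _ w + - Hh d G w _) (fun a => Phi d G (vadd x (unitv d a)) w + (-1) * Hh d G w (vadd x (unitv d a)))) by (intros; ring).
    rewrite lsum_plus, lsum_scal. ring.
Qed.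

Theorem mainTheorem18 (d : nat) (G : list (list Z)) :
  (1 <= d)%nat ->
  (forall y, In y G -> length y = d) ->
  (forall (n : nat) (x : list Z) (w : list nat),
      (2 <= n)%nat -> length x = d -> in_closure G x ->
      length w = n -> Forall (fun i => (i < d)%nat) w ->
      Phi d G x w =
      expect d G x (fun s => lsum (fun j => gfun d G n (wpos d x s j) w) (seq 0 (length s))))
  /\
  (forall x : list Z, length x = d -> in_closure G x ->
      Phi d G x [] = 1 /\ (forall i : nat, (i < d)%nat -> Phi d G x [i] = 0)).
Proof.
  intros Hd HG. split.
  - intros n x w Hn _ _ Hl _. subst n. rewrite (main_id d G Hd HG w x).
    reflexivity. destruct w; simpl in Hn; [lia|discriminate].
  - intros x _ _. split. apply Phi_nil; auto. intros i Hi. apply Phi_single; auto.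
Qed.
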